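(* Let $F,G\in 1+x\,\mathbb Z[[x]]$ be formal power series whose coefficients are congruent modulo $4$ (coefficient by coefficient). If there exists $H\in 1+x\,\mathbb Z[[x]]$ with $H^2=F$, then there exists $H'\in 1+x\,\mathbb Z[[x]]$ with $H'^2=G$. *)

(* Defs.v *)
From mathcomp Require Import all_boot all_order all_algebra.
Set Implicit Arguments. Unset Strict Implicit. Unset Printing Implicit Defensive.
Import Order.TTheory GRing.Theory Num.Theory.
Local Open Scope ring_scope.

Definition fps := nat -> int.

Definition fps_mul (f g : fps) : fps :=
  fun n => \sum_(i < n.+1) f i * g (n - i)%N.

Definition in_one_plus_xZ (f : fps) : Prop := f 0%N = 1.

(* Main.v *)
Require Import Defs.
From mathcomp Require Import all_boot all_order all_algebra.
From mathcomp Require Import zify ring lra.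
From Stdlib Require Import FunctionalExtensionality.
Import Order.TTheory GRing.Theory Num.Theory.
Local Open Scope ring_scope.

Definition Ssum (h : nat -> int) (m : nat) : int :=
  \sum_(1 <= i < m) h i * h (m - i)%N.

Definition nextc (G : fps) (s : seq int) : int :=
  ((G (size s) - \sum_(1 <= i < size s) s`_i * s`_(size s - i)) %/ 2)%Z.

Fixpoint hseq (G : fps) (n : nat) : seq int :=
  if n is n'.+1 then rcons (hseq G n') (nextc G (hseq G n')) else [:: 1].

Definition Hc (G : fps) (n : nat) : int := (hseq G n)`_n.

Lemma size_hseq G n : size (hseq G n) = n.+1.
Proof. by elim: n => //= n IH; rewrite size_rcons IH. Qed.

Lemma nth_hseq G n k : (k <= n)%N -> (hseq G n)`_k = Hc G k.
Proof.
elim: n => [|n IH]; first by rewrite leqn0 => /eqP ->.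
rewrite leq_eqVlt => /orP [/eqP -> //| Hk].
by rewrite /= nth_rcons size_hseq Hk IH.
Qed.

Lemma Hc0 G : Hc G 0 = 1.
Proof. by []. Qed.

Lemma Hc_rec G m : (0 < m)%N -> Hc G m = ((G m - Ssum (Hc G) m) %/ 2)%Z.
Proof.
case: m => // n _.
rewrite /Hc /= nth_rcons size_hseq ltnn eqxx /nextc size_hseq /Ssum.
congr ((G _ - _) %/ 2)%Z.
apply: eq_big_nat => i /andP [Hi1 Hi2].
rewrite !nth_hseq //; lia.
Qed.

Lemma fps_mul_split h m : (0 < m)%N ->
  fps_mul h h m = 2 * h 0%N * h m + Ssum h m.
Proof.
case: m => // n _.
rewrite /fps_mul big_ord_recl big_ord_recr /= subn0 subnn /Ssum.
rewrite big_add1 /= big_mkord.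
have -> : \sum_(i < n) h (bump 0 i) * h (n.+1 - bump 0 i)%N =
          \sum_(i < n) h i.+1 * h (n.+1 - i.+1)%N.
  by apply: eq_bigr => i _; rewrite /bump.
ring.
Qed.

Lemma Ssum_rev (h : nat -> int) m : \sum_(1 <= i < m) h i * h (m - i)%N = \sum_(1 <= i < m) h (m - i)%N * h i.
Proof.
rewrite big_nat_rev; apply: eq_big_nat => i /andP [Hi1 Hi2].
have -> : (1 + m - i.+1 = m - i)%N by lia.
have -> : (m - (m - i) = i)%N by lia.
by [].
Qed.

Lemma Ssum_diff (H H' : nat -> int) m :
  (forall i, (1 <= i < m)%N -> (2 %| H' i - H i)%Z) ->
  (4 %| Ssum H' m - Ssum H m)%Z.
Proof.
move=> Hd.
pose e i := ((H' i - H i) %/ 2)%Z.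
have He : forall i, (1 <= i < m)%N -> H' i = H i + e i * 2.
  by move=> i Hi; rewrite /e divzK ?Hd //; ring.
have -> : Ssum H' m - Ssum H m =
   \sum_(1 <= i < m) (e i * H (m - i)%N * 2 + H i * e (m - i)%N * 2
                       + e i * e (m - i)%N * 4).
  rewrite /Ssum -sumrB; apply: eq_big_nat => i Hi.
  rewrite (He i Hi) (He (m - i)%N); last by lia.
  ring.
rewrite !big_split /=.
have -> : \sum_(1 <= i < m) H i * e (m - i)%N * 2 =
          \sum_(1 <= i < m) e i * H (m - i)%N * 2.
  rewrite big_nat_rev; apply: eq_big_nat => i Hi.
  have -> : (1 + m - i.+1 = m - i)%N by lia.
  have -> : (m - (m - i) = i)%N by lia.
  ring.
have -> : \sum_(1 <= i < m) e i * H (m - i)%N * 2 +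
   \sum_(1 <= i < m) e i * H (m - i)%N * 2 + \sum_(1 <= i < m) e i * e (m - i)%N * 4
   = (\sum_(1 <= i < m) e i * H (m - i)%N + \sum_(1 <= i < m) e i * e (m - i)%N) * 4.
  by rewrite -!big_split /= mulr_suml; apply: eq_big_nat => i _; ring.
exact: dvdz_mull.
Qed.

Theorem proposition4p2 (F G : fps) :
  in_one_plus_xZ F -> in_one_plus_xZ G ->
  (forall n : nat, (F n = G n %[mod 4])%Z) ->
  (exists H : fps, in_one_plus_xZ H /\ fps_mul H H = F) ->
  exists H' : fps, in_one_plus_xZ H' /\ fps_mul H' H' = G.
Proof.
move=> F0 G0 FG [H [H0 HF]].
exists (Hc G).
have key : forall m, (2 %| Hc G m - H m)%Z /\ fps_mul (Hc G) (Hc G) m = G m.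
  elim/ltn_ind => m IH.
  case: (posnP m) => [->|mpos].
    rewrite /fps_mul big_ord1 /= Hc0 H0 G0; split => //.
  have D4 : (4 %| Ssum (Hc G) m - Ssum H m)%Z.
    by apply: Ssum_diff => i /andP [_ Hi]; case: (IH i Hi).
  have FGm : (4 %| G m - F m)%Z.
    by rewrite -eqz_mod_dvd eq_sym; apply/eqP; exact: FG.
  have Fm : F m = 2 * H m + Ssum H m.
    by rewrite -HF fps_mul_split // H0; ring.
  have : (4 %| (G m - Ssum (Hc G) m) - 2 * H m)%Z.
    have -> : (G m - Ssum (Hc G) m) - 2 * H m
      = (G m - F m) - (Ssum (Hc G) m - Ssum H m) by rewrite Fm; ring.
    exact: rpredB.
  case/dvdzP => t Ht.
  have Hm : Hc G m = H m + t * 2.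
    rewrite Hc_rec // (_ : G m - Ssum (Hc G) m = (H m + t * 2) * 2).
      by rewrite mulzK.
    have -> : G m - Ssum (Hc G) m = (G m - Ssum (Hc G) m - 2 * H m) + 2 * H m by ring.
    rewrite Ht; ring.
  split.
    by rewrite Hm (_ : H m + t * 2 - H m = t * 2); [apply: dvdz_mull | ring].
  rewrite fps_mul_split // Hc0.
  have -> : G m = (G m - Ssum (Hc G) m - 2 * H m) + 2 * H m + Ssum (Hc G) m by ring.
  rewrite Ht Hm; ring.
split; first by [].
by apply: functional_extensionality => m; case: (key m).
Qed.
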